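(* Let $L\subset\mathbb{Z}^m$ be a non-zero lattice with $L\cap\mathbb{N}^m=\{\mathbf 0\}$, and let $q$ be the number of elements of $\mathcal{T}_{\min}$. Then $\mathrm{bar}(I_L)\ge\lceil q/2\rceil$.
   Context: $K$ is a field, $I_L=(\mathbf x^{\mathbf u_+}-\mathbf x^{\mathbf u_-}:\mathbf u\in L)\subset K[x_1,\ldots,x_m]$ where $\mathbf u_\pm$ are the positive/negative parts of $\mathbf u$. A monomial $M$ is indispensable of $I_L$ if every system of binomial generators of $I_L$ contains a binomial having $M$ as a monomial. $\mathcal{T}_{\min}$ is the set of inclusion-minimal elements among supports $\mathrm{supp}(M)=\{i:x_i\mid M\}$ of indispensable monomials $M$ of $I_L$. $\mathrm{bar}(I_L)$ is the least $s$ such that there are binomials $B_1,\ldots,B_s\in I_L$ with $\mathrm{rad}(I_L)=\mathrm{rad}(B_1,\ldots,B_s)$. *)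

(* Defs.v *)
From HB Require Import structures.
From mathcomp Require Import all_boot all_order all_algebra.
From mathcomp Require Import mpoly.
Set Implicit Arguments. Unset Strict Implicit. Unset Printing Implicit Defensive.
Import Order.TTheory GRing.Theory Num.Theory.
Local Open Scope ring_scope.

Section LatticeIdeals.
Variables (K : fieldType) (m : nat).

(* Z^m is represented by row vectors 'rV[int]_m; N^m (exponents) by 'X_{1..m}. *)

(* L is a lattice: a subgroup of Z^m (automatically finitely generated). *)
Definition is_lattice (L : 'rV[int]_m -> Prop) : Prop :=
  L 0 /\ (forall u v, L u -> L v -> L (u - v)).

Definition nonzero_lattice (L : 'rV[int]_m -> Prop) : Prop :=
  exists u, L u /\ u != 0.

Definition meets_Nm_trivially (L : 'rV[int]_m -> Prop) : Prop :=
  forall u, L u -> (forall i, 0 <= u ord0 i) -> u = 0.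

Definition pos_part (u : 'rV[int]_m) : 'X_{1..m} :=
  [multinom `|Num.max (u ord0 i) 0|%N | i < m].
Definition neg_part (u : 'rV[int]_m) : 'X_{1..m} :=
  [multinom `|Num.max (- u ord0 i) 0|%N | i < m].

Definition ideal_gen (S : {mpoly K[m]} -> Prop) (p : {mpoly K[m]}) : Prop :=
  exists cs : seq ({mpoly K[m]} * {mpoly K[m]}),
    (forall c, c \in cs -> S c.2) /\ p = \sum_(c <- cs) c.1 * c.2.

Definition lattice_ideal (L : 'rV[int]_m -> Prop) : {mpoly K[m]} -> Prop :=
  ideal_gen (fun f => exists u, L u /\ f = 'X_[pos_part u] - 'X_[neg_part u]).

Definition radical (I : {mpoly K[m]} -> Prop) (p : {mpoly K[m]}) : Prop :=
  exists n : nat, I (p ^+ n).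

Definition binomial (p : {mpoly K[m]}) : Prop :=
  exists (c1 c2 : K) (a b : 'X_{1..m}), p = c1 *: 'X_[a] - c2 *: 'X_[b].

Definition binomial_generating_system (I : {mpoly K[m]} -> Prop)
    (S : {mpoly K[m]} -> Prop) : Prop :=
  (forall f, S f -> binomial f) /\ (forall p, ideal_gen S p <-> I p).

Definition indispensable_monomial (L : 'rV[int]_m -> Prop) (a : 'X_{1..m}) : Prop :=
  forall S, binomial_generating_system (lattice_ideal L) S ->
    exists f, S f /\ a \in msupp f.

Definition monomial_support (a : 'X_{1..m}) : {set 'I_m} :=
  [set i | (0 < a i)%N].

Definition is_indisp_support (L : 'rV[int]_m -> Prop) (T : {set 'I_m}) : Prop :=
  exists a, indispensable_monomial L a /\ monomial_support a = T.

Definition in_Tmin (L : 'rV[int]_m -> Prop) (T : {set 'I_m}) : Prop :=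
  is_indisp_support L T /\
  (forall T', is_indisp_support L T' -> T' \subset T -> T' = T).

(* there are s binomials B_1..B_s in I_L with rad(I_L) = rad(B_1,...,B_s);
   bar(I_L) is the least such s *)
Definition binomial_radical_generators (L : 'rV[int]_m -> Prop) (s : nat) : Prop :=
  exists Bs : seq {mpoly K[m]},
    size Bs = s /\
    (forall B, B \in Bs -> binomial B /\ lattice_ideal L B) /\
    (forall p, radical (lattice_ideal L) p <->
               radical (ideal_gen (fun f => f \in Bs)) p).

End LatticeIdeals.

(* Main.v *)
Require Import Defs.
From HB Require Import structures.
From mathcomp Require Import all_boot all_order all_algebra.
From mathcomp Require Import mpoly.
From mathcomp Require Import zify.
From Stdlib Require Import ClassicalDescription Classical.
Import Order.TTheory GRing.Theory Num.Theory.
Local Open Scope ring_scope.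

Lemma ord1' (i : 'I_1) : i = ord0.
Proof. by apply/val_inj; case: i => -[]. Qed.

Section Aux.
Variables (K : fieldType) (m : nat) (L : 'rV[int]_m -> Prop).
Hypothesis HL : is_lattice L.

Definition dif (e c : 'X_{1..m}) : 'rV[int]_m := \row_i ((e i)%:Z - (c i)%:Z).
Definition ind (c e : 'X_{1..m}) : K :=
  if excluded_middle_informative (L (dif e c)) then 1 else 0.
Definition phi (c : 'X_{1..m}) (p : {mpoly K[m]}) : K :=
  \sum_(e <- msupp p) p@_e * ind c e.

Lemma phi_sup c p (r : seq 'X_{1..m}) : uniq r -> {subset msupp p <= r} ->
  phi c p = \sum_(e <- r) p@_e * ind c e.
Proof.
move=> ur sub; rewrite /phi [RHS](bigID (mem (msupp p)) predT) /=.
rewrite [X in _ = _ + X]big1 ?addr0; last first.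
  by move=> e He; move: He; rewrite -mcoeff_eq0 => /eqP ->; rewrite mul0r.
rewrite -[RHS]big_filter; apply: perm_big; apply: uniq_perm.
- exact: msupp_uniq.
- exact: filter_uniq.
by move=> e; rewrite mem_filter; case E: (e \in msupp p) => //=; rewrite (sub _ E).
Qed.

Lemma phi0 c : phi c 0 = 0.
Proof. by rewrite /phi msupp0 big_nil. Qed.

Lemma phiD c p q : phi c (p + q) = phi c p + phi c q.
Proof.
set r := undup (msupp p ++ msupp q).
have ur : uniq r by exact: undup_uniq.
rewrite (@phi_sup c (p) _ ur); last by move=> e He; rewrite mem_undup mem_cat He.
rewrite (@phi_sup c (q) _ ur); last by move=> e He; rewrite mem_undup mem_cat He orbT.
rewrite (@phi_sup c (p + q) _ ur); last by move=> e /msuppD_le He; rewrite mem_undup.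
by rewrite -big_split /=; apply: eq_bigr => e _; rewrite mcoeffD mulrDl.
Qed.

Lemma phiN c p : phi c (- p) = - phi c p.
Proof.
rewrite (@phi_sup c (-p) _ (msupp_uniq p)); last by move=> e; rewrite (perm_mem (msuppN p)).
rewrite /phi -sumrN; apply: eq_bigr => e _; by rewrite mcoeffN mulNr.
Qed.

Lemma phiZX c k e : phi c (k *: 'X_[e]) = k * ind c e.
Proof.
rewrite (@phi_sup c (k *: 'X_[e]) [:: e]) //.
  by rewrite big_seq1 mcoeffZ mcoeffX eqxx mulr1.
by move=> x /msuppZ_le; rewrite msuppX.
Qed.

Lemma phi_sum c (T : Type) (cs : seq T) (F : T -> {mpoly K[m]}) :
  phi c (\sum_(x <- cs) F x) = \sum_(x <- cs) phi c (F x).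
Proof.
elim: cs => [|x cs IH]; first by rewrite !big_nil phi0.
by rewrite !big_cons phiD IH.
Qed.


Lemma posneg (u : 'rV[int]_m) i : ((pos_part u) i)%:Z - ((neg_part u) i)%:Z = u ord0 i.
Proof. rewrite /pos_part /neg_part !mnmE; lia. Qed.

Lemma Lopp (u : 'rV[int]_m) : L u -> L (- u).
Proof. by case: HL => H0 Hs Hu; rewrite -sub0r; apply: Hs. Qed.

Lemma Ladd (u v : 'rV[int]_m) : L u -> L v -> L (u + v).
Proof. by move=> Hu Hv; rewrite -[v]opprK; case: HL => _ Hs; apply: Hs => //; apply: Lopp. Qed.

Lemma ind_shift c e (u : 'rV[int]_m) : L u -> ind c (e + pos_part u) = ind c (e + neg_part u).
Proof.
move=> Lu.
have E : dif (e + pos_part u) c = dif (e + neg_part u) c + u.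
  apply/matrixP => i j; rewrite !mxE !mnmDE (ord1 i) -(posneg u j); lia.
rewrite /ind E.
case: excluded_middle_informative => H1; case: excluded_middle_informative => H2 //.
- by case: H2; move: (Ladd _ _ H1 (Lopp _ Lu)); rewrite addrK.
- by case: H1; apply: Ladd.
Qed.

Lemma phi_gen c (u : 'rV[int]_m) q : L u -> phi c (q * ('X_[pos_part u] - 'X_[neg_part u])) = 0.
Proof.
move=> Lu; rewrite [q]mpolyE mulr_suml phi_sum big1 // => e _.
rewrite -scalerAl mulrBr -!mpolyXD scalerBr phiD phiN !phiZX ind_shift //.
by rewrite subrr.
Qed.

Lemma phi_ideal c (p : {mpoly K[m]}) : lattice_ideal L p -> phi c p = 0.
Proof.
case=> cs [Hcs ->]; rewrite phi_sum big_seq big1 // => x /Hcs [u [Lu ->]].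
exact: phi_gen.
Qed.


Lemma ind_refl a : ind a a = 1.
Proof.
rewrite /ind; case: excluded_middle_informative => // H; case: H.
have -> : dif a a = 0 by apply/matrixP => i j; rewrite !mxE subrr.
by case: HL.
Qed.

Lemma binom_aux (a b : 'X_{1..m}) (c1 c2 : K) :
  lattice_ideal L (c1 *: 'X_[a] - c2 *: 'X_[b]) ->
  a \in msupp (c1 *: 'X_[a] - c2 *: 'X_[b]) ->
  exists v, L v /\ v != 0 /\ (pos_part v <= a)%MM.
Proof.
move=> HB Ha; have := phi_ideal a _ HB; rewrite phiD phiN !phiZX ind_refl mulr1.
have [eab|nab] := eqVneq a b.
  subst b; rewrite ind_refl mulr1; move/eqP; rewrite subr_eq0 => /eqP E.
  by move: Ha; rewrite E subrr msupp0.
have Ca : c1 != 0.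
  move: Ha; rewrite mcoeff_msupp mcoeffB !mcoeffZ !mcoeffX eqxx [b == a]eq_sym (negbTE nab).
  by rewrite mulr0 subr0 mulr1.
rewrite /ind; case: excluded_middle_informative => Lba; last first.
  by rewrite mulr0 subr0 => E; move: Ca; rewrite E eqxx.
move=> _; exists (- dif b a); split; first exact: Lopp.
split.
  apply/negP => /eqP E; move/eqP: nab; apply; apply/mnmP => i; have := congr1 (fun M : 'rV[int]_m => M ord0 i) E.
  rewrite !mxE; lia.
apply/mnm_lepP => i; rewrite /pos_part mnmE !mxE; lia.
Qed.

Lemma ideal_opp (p : {mpoly K[m]}) : lattice_ideal L p -> lattice_ideal L (- p).
Proof.
case=> cs [Hcs ->]; exists [seq (- c.1, c.2) | c <- cs]; split.
  by move=> c /mapP [c' Hc' ->] /=; apply: Hcs.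
by rewrite big_map -sumrN; apply: eq_bigr => c _ /=; rewrite mulNr.
Qed.

Lemma binom_lat (B : {mpoly K[m]}) (a : 'X_{1..m}) : Defs.binomial B -> lattice_ideal L B ->
  a \in msupp B -> exists v, L v /\ v != 0 /\ (pos_part v <= a)%MM.
Proof.
case=> c1 [c2 [a1 [b1 EB]]] HB Ha.
rewrite EB in HB Ha; have := msuppB_le Ha; rewrite mem_cat => /orP [] /msuppZ_le; rewrite msuppX inE => /eqP Ea.
  by subst; exact: (binom_aux _ _ _ _ HB Ha).
subst; apply: (@binom_aux b1 a1 c2 c1).
  by rewrite -opprB; apply: ideal_opp.
by rewrite -opprB (perm_mem (msuppN _)).
Qed.

End Aux.

Lemma classical_min (P : nat -> Prop) k0 : P k0 ->
  exists k, P k /\ forall j, P j -> (k <= j)%N.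
Proof.
move=> Pk0; apply: NNPP => H.
suff: forall n k, (k <= n)%N -> ~ P k by move/(_ k0 k0 (leqnn _)).
elim=> [|n IH] k Hk Pk; apply: H; exists k; split=> // j Pj; rewrite leqNgt;
  apply/negP => ltjk.
  by move: (leq_trans ltjk Hk).
by apply: (IH j) => //; rewrite -ltnS (leq_trans ltjk Hk).
Qed.



Section Aux2.
Variables (K : fieldType) (m : nat) (L : 'rV[int]_m -> Prop).
Hypothesis HL : is_lattice L.
Hypothesis HN : meets_Nm_trivially L.

Lemma mdeg_eq (a b : 'X_{1..m}) : (a <= b)%MM -> (mdeg b <= mdeg a)%N -> a = b.
Proof.
move=> ab H; have E := submK ab.
have D : mdeg b = (mdeg (b - a)%MM + mdeg a)%N by rewrite -{1}E mdegD.
have Z : mdeg (b - a)%MM = 0%N by move: H; rewrite D; lia.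
by move/eqP: Z; rewrite mdeg_eq0 => /eqP E0; rewrite -E E0 add0m.
Qed.

Definition supp (v : 'rV[int]_m) := monomial_support (pos_part v).

Lemma pn_eq (w : 'rV[int]_m) : pos_part w = neg_part w -> w = 0.
Proof.
move=> E; apply/matrixP => i j; rewrite (ord1' i) mxE.
have := congr1 (fun a : 'X_{1..m} => a j) E; rewrite /pos_part /neg_part !mnmE; lia.
Qed.

Lemma pn0 : pos_part (0 : 'rV[int]_m) = neg_part 0.
Proof. by apply/mnmP => i; rewrite /pos_part /neg_part !mnmE mxE oppr0. Qed.

Lemma pos_opp (u : 'rV[int]_m) : pos_part (- u) = neg_part u.
Proof. by apply/mnmP => i; rewrite /pos_part /neg_part !mnmE mxE. Qed.

Lemma gen_single (S : {mpoly K[m]} -> Prop) f : S f -> ideal_gen S f.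
Proof.
move=> Sf; exists [:: (1, f)]; split; first by move=> c; rewrite inE => /eqP -> .
by rewrite big_cons big_nil mul1r addr0.
Qed.

Lemma indisp_min (w : 'rV[int]_m) : L w -> w != 0 ->
  (forall v, L v -> v != 0 -> (pos_part v <= pos_part w)%MM -> pos_part v = pos_part w) ->
  indispensable_monomial K L (pos_part w).
Proof.
move=> Lw nw Hmin S [Sbin Sgen].
have : lattice_ideal L ('X_[pos_part w] - 'X_[neg_part w] : {mpoly K[m]}).
  by apply: gen_single; exists w.
move/Sgen => [cs [Hcs EP]].
have Hw : pos_part w \in msupp ('X_[pos_part w] - 'X_[neg_part w] : {mpoly K[m]}).
  rewrite mcoeff_msupp mcoeffB !mcoeffX eqxx.
  have [E|ne] := eqVneq (neg_part w) (pos_part w).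
    by move: nw; rewrite (pn_eq _ (esym E)) eqxx.
  by rewrite subr0 oner_neq0.
rewrite EP in Hw; move/msupp_sum_le: Hw => /flatten_mapP [c].
rewrite mem_filter => /andP [_ cin] /msuppM_le /allpairsP [[x1 x2] /= [_ x2in Ex]].
have Sc := Hcs c cin.
have [v [Lv [nv vle]]] := @binom_lat K m L HL _ _ (Sbin _ Sc) ((Sgen _).1 (gen_single _ _ Sc)) x2in.
have x2le : (x2 <= pos_part w)%MM.
  by rewrite Ex; apply/mnm_lepP => i; rewrite mnmDE leq_addl.
have vw : (pos_part v <= pos_part w)%MM.
  apply/mnm_lepP => i; move/mnm_lepP: vle => /(_ i) h1; move/mnm_lepP: x2le => /(_ i) h2.
  exact: leq_trans h1 h2.
have Ev := Hmin v Lv nv vw.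
exists c.2; split => //.
suff -> : pos_part w = x2 by [].
apply/mnmP => i; apply/eqP; rewrite eqn_leq.
move/mnm_lepP: x2le => ->; move/mnm_lepP: vle => /(_ i); rewrite Ev => -> //.
Qed.


Lemma supp_le (v w : 'rV[int]_m) : (pos_part v <= pos_part w)%MM -> supp v \subset supp w.
Proof.
move/mnm_lepP => H; apply/subsetP => i; rewrite /supp /monomial_support !inE => h.
exact: leq_trans h (H i).
Qed.

Lemma Tmin_min T : in_Tmin K L T ->
  forall v, L v -> v != 0 -> supp v \subset T -> supp v = T.
Proof.
move=> [HT Hmin] v Lv nv sub.
have [//|neq] := eqVneq (supp v) T.
pose P k := exists w, L w /\ w != 0 /\ supp w \subset supp v /\ mdeg (pos_part w) = k.
have [k [[w [Lw [nw [sw Ew]]]] kmin]] : exists k, P k /\ forall j, P j -> (k <= j)%N.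
  by apply: (@classical_min P (mdeg (pos_part v))); exists v; split => //.
have Iw : indispensable_monomial K L (pos_part w).
  apply: indisp_min => // v' Lv' nv' le'.
  apply: mdeg_eq => //; rewrite Ew; apply: kmin; exists v'; split => //; split => //.
  split => //; exact: subset_trans (supp_le _ _ le') sw.
have := Hmin (supp w); rewrite /is_indisp_support.
move/(_ (ex_intro _ (pos_part w) (conj Iw erefl)) (subset_trans sw sub)) => E.
by move: neq; rewrite eqEsubset sub /= -E sw.
Qed.

Lemma Tmin_witness T : in_Tmin K L T ->
  exists u, L u /\ u != 0 /\ supp u = T.
Proof.
move=> [[a [Ia Sa]] _].
pose S0 := fun f : {mpoly K[m]} => exists u, L u /\ f = 'X_[pos_part u] - 'X_[neg_part u].
have GS : binomial_generating_system (lattice_ideal L) S0.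
  split => // f [u [_ ->]]; exists 1, 1, (pos_part u), (neg_part u); by rewrite !scale1r.
have [f [[u [Lu ->]] Ha]] := Ia S0 GS.
have nu : u != 0.
  apply/negP => /eqP E; move: Ha; by rewrite E pn0 subrr msupp0.
have := msuppB_le Ha; rewrite mem_cat !msuppX !inE => /orP [] /eqP Ea.
  by exists u; rewrite /supp -Ea.
exists (- u); split; first exact: Lopp.
by rewrite oppr_eq0 /supp pos_opp -Ea.
Qed.

End Aux2.

Section Proj.
Variables (K : fieldType) (m : nat) (T : {set 'I_m}).

Definition lq : m.-tuple {mpoly K[m]} :=
  [tuple (if i \in T then 'X_i else 0 : {mpoly K[m]}) | i < m].
Definition pi (p : {mpoly K[m]}) : {mpoly K[m]} := p \mPo lq.

Lemma piX a : pi 'X_[a] = if monomial_support a \subset T then 'X_[a] else 0.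
Proof.
rewrite /pi comp_mpolyX; case: ifP => [/subsetP sub | /negbT /subsetPn [i ia iT]].
  rewrite [RHS]mpolyXE_id; apply: eq_bigr => i _; rewrite tnth_mktuple.
  case: ifP => // iT.
  have -> : a i = 0%N.
    apply/eqP; rewrite -leqn0 leqNgt; apply/negP => h.
    by move: (sub i); rewrite /monomial_support inE iT => /(_ h).
  by rewrite !expr0.
rewrite (bigD1 i) //= tnth_mktuple (negbTE iT) expr0n.
move: ia; rewrite /monomial_support inE => ia.
by rewrite eqn0Ngt ia /= mul0r.
Qed.

Lemma msupp_pi p a : a \in msupp (pi p) -> a \in msupp p /\ monomial_support a \subset T.
Proof.
rewrite {1}[p]mpolyE /pi raddf_sum /=.
move/msupp_sum_le/flatten_mapP => [e]; rewrite mem_filter => /andP [_ ein].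
rewrite comp_mpolyZ => /msuppZ_le; rewrite -/(pi _) piX; case: ifP => h.
  by rewrite msuppX inE => /eqP ->.
by rewrite msupp0.
Qed.

Lemma piXn p n : pi (p ^+ n) = pi p ^+ n.
Proof. by rewrite /pi rmorphXn. Qed.
Lemma piM p q : pi (p * q) = pi p * pi q.
Proof. by rewrite /pi rmorphM. Qed.
Lemma piB p q : pi (p - q) = pi p - pi q.
Proof. by rewrite /pi raddfB. Qed.
Lemma pi_sum (I : Type) (r : seq I) (F : I -> {mpoly K[m]}) :
  pi (\sum_(i <- r) F i) = \sum_(i <- r) pi (F i).
Proof. by rewrite /pi raddf_sum. Qed.

End Proj.

Lemma ms_le (m : nat) (a b : 'X_{1..m}) : (a <= b)%MM -> monomial_support a \subset monomial_support b.
Proof.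
move/mnm_lepP => H; apply/subsetP => i; rewrite /monomial_support !inE => h.
exact: leq_trans h (H i).
Qed.

Section Main.
Variables (K : fieldType) (m : nat) (L : 'rV[int]_m -> Prop).
Hypothesis HL : is_lattice L.
Hypothesis HN : meets_Nm_trivially L.

Lemma neg_pos (u : 'rV[int]_m) : L u -> u != 0 -> exists i, (0 < neg_part u i)%N.
Proof.
move=> Lu nu; apply: NNPP => H; move/eqP: nu; apply; apply: (HN _ Lu) => i.
have h : ~ (0 < neg_part u i)%N by move=> h; apply: H; exists i.
move: h; rewrite /neg_part mnmE; lia.
Qed.

Lemma hit T (Bs : seq {mpoly K[m]}) : in_Tmin K L T ->
  (forall B, B \in Bs -> Defs.binomial B /\ lattice_ideal L B) ->
  (forall p, radical (lattice_ideal L) p <-> radical (ideal_gen (fun f => f \in Bs)) p) ->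
  exists B, B \in Bs /\ exists a, a \in msupp B /\ monomial_support a = T.
Proof.
move=> HT HB Hrad.
have [u [Lu [nu su]]] := @Tmin_witness K m L HL T HT.
have : radical (lattice_ideal L) ('X_[pos_part u] - 'X_[neg_part u] : {mpoly K[m]}).
  by exists 1%N; rewrite expr1; apply: (@gen_single K m); exists u.
case/Hrad => n [cs [Hcs EP]].
have := congr1 (pi K m T) EP; rewrite piXn pi_sum piB !piX.
have -> : monomial_support (pos_part u) \subset T by rewrite -su subxx.
have -> : monomial_support (neg_part u) \subset T = false.
  apply/negP => /subsetP sub; have [i hi] := neg_pos _ Lu nu.
  have : i \in T by apply: sub; rewrite /monomial_support inE.
  rewrite -su /supp /monomial_support inE; move: hi; rewrite /pos_part /neg_part !mnmE; lia.
rewrite subr0 mpolyXn => E.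
have : (pos_part u *+ n)%MM \in msupp ('X_[pos_part u *+ n] : {mpoly K[m]}) by rewrite msuppX inE.
rewrite E => /msupp_sum_le /flatten_mapP [c]; rewrite mem_filter => /andP [_ cin].
rewrite piM => /msuppM_le /allpairsP [[x1 x2] /= [_ x2in _]].
have [x2B sT] := @msupp_pi K m T _ _ x2in.
have [Bbin Bid] := HB _ (Hcs c cin).
have [v [Lv [nv vle]]] := @binom_lat K m L HL _ _ Bbin Bid x2B.
have svT : supp m v \subset T := subset_trans (ms_le _ _ _ vle) sT.
have Ev := @Tmin_min K m L HL T HT v Lv nv svT.
exists c.2; split; first exact: Hcs.
exists x2; split => //; apply/eqP; rewrite eqEsubset sT /= -Ev.
exact: ms_le _ _ _ vle.
Qed.

End Main.

Lemma size_binom (K : fieldType) (m : nat) (B : {mpoly K[m]}) :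
  Defs.binomial B -> (size (msupp B) <= 2)%N.
Proof.
case=> c1 [c2 [a [b ->]]].
have : (size (msupp (c1 *: 'X_[a] - c2 *: 'X_[b])) <= size [:: a; b])%N.
  apply: uniq_leq_size; first exact: msupp_uniq.
  move=> x /msuppB_le; rewrite mem_cat => /orP [] /msuppZ_le; rewrite msuppX !inE => ->//.
  by rewrite orbT.
by [].
Qed.

Lemma size_flat (K : fieldType) (m : nat) (Bs : seq {mpoly K[m]}) :
  (forall B, B \in Bs -> Defs.binomial B) ->
  (size (flatten [seq msupp B | B <- Bs]) <= (size Bs).*2)%N.
Proof.
elim: Bs => [|B Bs IH] //= H.
rewrite size_cat doubleS.
have h1 := @size_binom K m B (H B (mem_head _ _)).
have h2 : (size (flatten [seq msupp B0 | B0 <- Bs]) <= (size Bs).*2)%N.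
  by apply: IH => B' HB'; apply: H; rewrite inE HB' orbT.
rewrite -addnn in h2 *; lia.
Qed.

Theorem proposition2p15 (K : fieldType) (m : nat) (L : 'rV[int]_m -> Prop)
    (Tmin : {set {set 'I_m}}) :
  is_lattice L -> nonzero_lattice L -> meets_Nm_trivially L ->
  (forall T, T \in Tmin <-> in_Tmin K L T) ->
  forall s : nat, binomial_radical_generators K L s ->
  (uphalf #|Tmin| <= s)%N.
Proof.
move=> HL _ HN HTmin s [Bs [Hsize [HB Hrad]]].
rewrite leq_uphalf_double -Hsize.
have sub : Tmin \subset [set x | x \in [seq monomial_support a | a <- flatten [seq msupp B | B <- Bs]]].
  apply/subsetP => T /HTmin HT.
  have [B [BB [a [aB Ea]]]] := @hit K m L HL HN T Bs HT HB Hrad.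
  rewrite inE; apply/mapP; exists a => //; apply/flatten_mapP; by exists B.
apply: leq_trans (subset_leq_card sub) _.
rewrite cardsE; apply: leq_trans (card_size _) _.
rewrite size_map; apply: size_flat => B /HB [] //.
Qed.
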